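(* Let $K\ge 3$, $T\subseteq[K]$ with $|T|=N$, let ${\bm{x}}_1,\dots,{\bm{x}}_K\in\mathbb{R}^d$ and $z_1,\dots,z_K\in\mathbb{R}$, and suppose there is ${\bm{a}}\in\mathbb{R}^d$ with ${\bm{a}}^T{\bm{x}}_1 < {\bm{a}}^T{\bm{x}}_2 < \cdots < {\bm{a}}^T{\bm{x}}_K$. Then there exist $m$ with $$ m \le K-1-\sum_{P\in\mathcal{P}([K]\setminus T)} \max\{|P|-2,0\}$$ and parameters ${\bm{W}}_2\in\mathbb{R}^{1\times m}$, ${\bm{b}}_1\in\mathbb{R}^m$, $b_2\in\mathbb{R}$ such that the network $g({\bm{x}}) = {\bm{W}}_2\sigma(\mathbf{1}_m{\bm{a}}^T{\bm{x}} + {\bm{b}}_1)+b_2$ satisfies $g({\bm{x}}_i)=z_i$ for all $i\in T$ and $g({\bm{x}}_i)=0$ for all $i\in[K]\setminus T$.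
   Context: $[K]=\{1,\dots,K\}$; $\sigma(t)=\max\{t,0\}$ applied coordinatewise; $\mathbf{1}_m\in\mathbb{R}^m$ is the all-ones vector. For $I\subseteq[K]$, the consecutive partition $\mathcal{P}(I)$ is the partition of $I$ into maximal subsets of consecutive integers (e.g. $\mathcal{P}(\{1,2,3,5,6,8,10,11,12,13\}) = \{\{1,2,3\},\{5,6\},\{8\},\{10,11,12,13\}\}$). *)

(* Defs.v *)
(* Indices [K] = {1..K} are represented by 'I_K = {0..K-1}. *)
From mathcomp Require Import all_boot all_order all_algebra.
Set Implicit Arguments. Unset Strict Implicit. Unset Printing Implicit Defensive.
Import Order.TTheory GRing.Theory Num.Theory.
Local Open Scope ring_scope.

Definition relu (R : realFieldType) (t : R) : R := Num.max t 0.

Definition dotv (R : realFieldType) (d : nat) (a x : 'cV[R]_d) : R :=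
  (a^T *m x) 0 0.

Definition net (R : realFieldType) (d m : nat) (a : 'cV[R]_d)
  (W2 : 'M[R]_(1, m)) (b1 : 'cV[R]_m) (b2 : R) (x : 'cV[R]_d) : R :=
  \sum_(j < m) W2 0 j * relu (dotv a x + b1 j 0) + b2.

Definition consecutive (K : nat) (P : {set 'I_K}) : bool :=
  [forall i : 'I_K, forall j : 'I_K, forall k : 'I_K,
     (i \in P) ==> (k \in P) ==> ((i <= j)%N && (j <= k)%N) ==> (j \in P)].

Definition consec_partition (K : nat) (I : {set 'I_K}) : {set {set 'I_K}} :=
  [set P : {set 'I_K} | [&& P != set0, P \subset I, consecutive P &
     [forall Q : {set 'I_K}, ((P \subset Q) && (Q \subset I) && consecutive Q)
        ==> (Q == P)]]].

(* Main.v *)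
Require Import Defs.
From mathcomp Require Import all_boot all_order all_algebra.
From mathcomp Require Import zify ring lra.
Set Implicit Arguments. Unset Strict Implicit. Unset Printing Implicit Defensive.
Import Order.TTheory GRing.Theory Num.Theory.
Local Open Scope ring_scope.

Section Interp.
Variables (R : realFieldType) (n : nat) (t y : nat -> R).
Definition slp j := (y j.+1 - y j) / (t j.+1 - t j).
Definition cf j := slp j - (if j is j'.+1 then slp j' else 0).

Hypothesis incr : forall i, (i < n)%N -> t i < t i.+1.

Lemma mono i j : (i < j)%N -> (j <= n)%N -> t i < t j.
Proof.
elim: j => [|j IH] //; rewrite ltnS leq_eqVlt => /orP[/eqP -> | ij] jn.
  exact: incr.
apply: lt_trans (IH ij (ltnW jn)) (incr jn).
Qed.

Lemma sum_cf i : \sum_(0 <= j < i.+1) cf j = slp i.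
Proof.
elim: i => [|i IH]; first by rewrite big_nat1 /cf subr0.
by rewrite big_nat_recr //= IH /cf addrC subrK.
Qed.

Lemma H_eq i : (i <= n)%N -> \sum_(0 <= j < i) cf j * (t i - t j) = y i - y 0%N.
Proof.
elim: i => [|i IH] Hi; first by rewrite big_geq // subrr.
have e : forall j, cf j * (t i.+1 - t j) = cf j * (t i.+1 - t i) + cf j * (t i - t j).
  by move=> j; ring.
rewrite (eq_bigr _ (fun j _ => e j)) big_split /= -big_distrl /= sum_cf.
rewrite big_nat_recr //= subrr mulr0 addr0 IH ?(ltnW Hi) //.
rewrite /slp mulfVK; first by ring.
by rewrite subr_eq0; apply/eqP => h; have := incr Hi; rewrite h ltxx.
Qed.

Lemma interp i : (i <= n)%N ->
  y 0%N + \sum_(j < n) cf j * relu (t i - t j) = y i.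
Proof.
move=> Hi.
have e : forall j : 'I_n, cf j * relu (t i - t j) =
   (if (j < i)%N then cf j * (t i - t j) else 0).
  move=> j; rewrite /relu; case: ltnP => ji.
    by rewrite max_l // subr_ge0 ltW // mono.
  rewrite max_r ?mulr0 //; rewrite subr_le0.
  move: ji; rewrite leq_eqVlt => /orP[/eqP -> | ij]; first by [].
  by apply: ltW; apply: mono => //; apply: ltnW (ltn_ord j).
rewrite (eq_bigr _ (fun j _ => e j)) -(big_mkord xpredT (fun j => if (j < i)%N then cf j * (t i - t j) else 0)).
rewrite (big_cat_nat (leq0n i) Hi) /=.
rewrite [X in _ + (_ + X)]big1_seq ?addr0; last first.
  by move=> j /andP[_]; rewrite mem_index_iota => /andP[ij _]; rewrite ltnNge ij.
rewrite (@eq_big_nat _ _ _ 0 i _ (fun j => cf j * (t i - t j))); last first.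
  by move=> j /andP[_ ->].
by rewrite H_eq // addrC subrK.
Qed.
End Interp.
Lemma consecP K (P : {set 'I_K}) (i j k : 'I_K) : consecutive P -> i \in P -> k \in P ->
  (i <= j)%N -> (j <= k)%N -> j \in P.
Proof.
move=> /forallP/(_ i)/forallP/(_ j)/forallP/(_ k) H iP kP ij jk.
by move: H; rewrite iP kP ij jk.
Qed.

Lemma partP K (I P : {set 'I_K}) : P \in consec_partition I ->
  [/\ P != set0, P \subset I, consecutive P &
     forall Q : {set 'I_K}, P \subset Q -> Q \subset I -> consecutive Q -> Q = P].
Proof.
rewrite inE => /and4P[H1 H2 H3 /forallP H4]; split => // Q PQ QI cQ.
by apply/eqP; move: (H4 Q); rewrite PQ QI cQ.
Qed.

Lemma part_meet K (I P Q : {set 'I_K}) c : P \in consec_partition I ->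
  Q \in consec_partition I -> c \in P -> c \in Q -> P = Q.
Proof.
move=> /partP[_ PI cP mP] /partP[_ QI cQ mQ] cinP cinQ.
have cU : consecutive (P :|: Q).
  apply/forallP => i; apply/forallP => j; apply/forallP => k.
  apply/implyP => /setUP iPQ; apply/implyP => /setUP kPQ; apply/implyP => /andP[ij jk].
  apply/setUP.
  case: iPQ => iX; case: kPQ => kX.
  - by left; exact: (consecP cP iX kX ij jk).
  - case: (leqP j c) => jc.
      by left; exact: (consecP cP iX cinP ij jc).
    by right; exact: (consecP cQ cinQ kX (ltnW jc) jk).
  - case: (leqP j c) => jc.
      by right; exact: (consecP cQ iX cinQ ij jc).
    by left; exact: (consecP cP cinP kX (ltnW jc) jk).
  - by right; exact: (consecP cQ iX kX ij jk).
have UI : P :|: Q \subset I by rewrite subUset PI QI.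
have e1 := mP _ (subsetUl P Q) UI cU.
have e2 := mQ _ (subsetUr P Q) UI cU.
by rewrite -e1 e2.
Qed.

Definition intr K (P : {set 'I_K}) : {set 'I_K} :=
  [set j in P | [exists i in P, (i < j)%N] && [exists k in P, (j < k)%N]].

Lemma card_intr K (P : {set 'I_K}) : (#|P| <= #|intr P| + 2)%N.
Proof.
set Lo := [set j in P | ~~ [exists i in P, (i < j)%N]].
set Hi := [set j in P | ~~ [exists k in P, (j < k)%N]].
have cLo : (#|Lo| <= 1)%N.
  apply/card_le1_eqP => u v; rewrite !inE => /andP[uP /existsP nu] /andP[vP /existsP nv].
  apply: val_inj => /=; apply/eqP; case: (ltngtP u v) => // h; exfalso.
    by apply: nv; exists u; rewrite uP.
  by apply: nu; exists v; rewrite vP.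
have cHi : (#|Hi| <= 1)%N.
  apply/card_le1_eqP => u v; rewrite !inE => /andP[uP /existsP nu] /andP[vP /existsP nv].
  apply: val_inj => /=; apply/eqP; case: (ltngtP u v) => // h; exfalso.
    by apply: nu; exists v; rewrite vP.
  by apply: nv; exists u; rewrite uP.
have sub : P \subset intr P :|: (Lo :|: Hi).
  apply/subsetP => j jP; rewrite !inE jP /=.
  by case: [exists i in P, (i < j)%N]; case: [exists k in P, (j < k)%N].
have h1 := subset_leq_card sub.
have h2 := (leq_card_setU (intr P) (Lo :|: Hi)).1.
have h3 := (leq_card_setU Lo Hi).1.
apply: (leq_trans h1); apply: (leq_trans h2); rewrite leq_add2l.
by apply: (leq_trans h3); rewrite -[2%N]/(1 + 1)%N leq_add.
Qed.

Lemma sum_disj (T I : finType) (s : seq I) (f : I -> {set T}) : uniq s ->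
  {in s &, forall P Q, P != Q -> [disjoint f P & f Q]} ->
  \sum_(P <- s) #|f P| = #|\bigcup_(P <- s) f P|.
Proof.
elim: s => [|P s IH] /=; first by rewrite !big_nil cards0.
move=> /andP[Ps us] dis.
rewrite !big_cons IH //; last first.
  by move=> u v us' vs'; apply: dis; rewrite inE ?us' ?vs' orbT.
rewrite cardsU.
suff -> : f P :&: \bigcup_(j <- s) f j = set0 by rewrite cards0 subn0.
apply/eqP; rewrite setI_eq0 disjoint_sym -setI_eq0 big_distrl /= big1_seq //.
move=> Q /andP[_ Qs]; apply/eqP; rewrite setI_eq0.
apply: dis; rewrite ?inE ?Qs ?eqxx ?orbT //.
by apply/eqP => eQ; move: Ps; rewrite -eQ Qs.
Qed.

Lemma sum_part_le K (I : {set 'I_K}) :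
  (\sum_(P in consec_partition I) (#|P| - 2) <=
   #|\bigcup_(P in consec_partition I) intr P|)%N.
Proof.
apply: (@leq_trans (\sum_(P in consec_partition I) #|intr P|)).
  by apply: leq_sum => P _; rewrite leq_subLR addnC card_intr.
rewrite -!big_enum sum_disj ?enum_uniq //.
move=> P Q; rewrite !mem_enum => Pp Qp nPQ.
rewrite -setI_eq0; apply/eqP/setP => c; rewrite !inE.
apply/negP => /andP[/andP[cP _] /andP[cQ _]].
by move/eqP: nPQ; apply; apply: (part_meet Pp Qp cP cQ).
Qed.

Lemma intr_notT n (T : {set 'I_n.+1}) P (j : 'I_n.+1) :
  P \in consec_partition (~: T) -> j \in intr P ->
  [/\ (0 < j)%N, (j < n)%N, (inord j.-1 : 'I_n.+1) \notin T, j \notin T &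
      (inord j.+1 : 'I_n.+1) \notin T].
Proof.
move=> /partP[_ PI cP _]; rewrite inE => /andP[jP /andP[/existsP[i /andP[iP ij]] /existsP[k /andP[kP jk]]]].
have nT : forall u, u \in P -> u \notin T.
  by move=> u uP; have := subsetP PI u uP; rewrite inE.
have kn : (k <= n)%N by rewrite -ltnS ltn_ord.
have j0 : (0 < j)%N by apply: leq_ltn_trans ij.
have jn : (j < n)%N by apply: leq_trans jk kn.
have jK := ltn_ord j.
split => //.
- apply: nT; apply: (consecP cP iP jP); rewrite inordK; lia.
- exact: nT.
- apply: nT; apply: (consecP cP jP kP); rewrite inordK; lia.
Qed.

Unset Implicit Arguments.

Theorem theorem4p6 (R : realFieldType) (K d N : nat) (T : {set 'I_K})
  (x : 'I_K -> 'cV[R]_d) (z : 'I_K -> R) (a : 'cV[R]_d) :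
  (3 <= K)%N -> #|T| = N ->
  (forall i j : 'I_K, (i < j)%N -> dotv a (x i) < dotv a (x j)) ->
  exists (m : nat) (W2 : 'M[R]_(1, m)) (b1 : 'cV[R]_m) (b2 : R),
    (m <= K - 1 - \sum_(P in consec_partition (~: T)) (#|P| - 2))%N /\
    (forall i, i \in T -> net a W2 b1 b2 (x i) = z i) /\
    (forall i, i \notin T -> net a W2 b1 b2 (x i) = 0).
Proof.
move=> K3 _; case: K T x z K3 => [|n] T x z K3 incr //.
pose t := fun m : nat => dotv a (x (inord m)).
pose y := fun m : nat => if (inord m : 'I_n.+1) \in T then z (inord m) else 0.
have tinc : forall i, (i < n)%N -> t i < t i.+1.
  by move=> i hi; apply: incr; rewrite !inordK // ltnS ltnW.
pose c := cf t y.
pose J := [set j : 'I_n.+1 | (j < n)%N && (c j != 0)].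
pose ev := fun k : 'I_#|J| => (enum_val k : 'I_n.+1).
exists #|J|, (\row_k c (ev k)), (\col_k (- t (ev k))), (y 0%N).
have key : forall i : 'I_n.+1,
  net a (\row_k c (ev k)) (\col_k (- t (ev k))) (y 0%N) (x i) = y i.
  move=> i; rewrite /net.
  under eq_bigr do rewrite !mxE.
  have -> : \sum_(k < #|J|) c (ev k) * relu (dotv a (x i) + - t (ev k)) =
     \sum_(j in J) c j * relu (dotv a (x i) + - t j).
    by rewrite (big_enum_val (fun j : 'I_n.+1 => c j * relu (dotv a (x i) + - t j))).
  have -> : \sum_(j in J) c j * relu (dotv a (x i) + - t j) =
            \sum_(j < n.+1 | (j < n)%N) c j * relu (dotv a (x i) + - t j).
    rewrite big_mkcond [RHS]big_mkcond; apply: eq_bigr => j _; rewrite inE.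
    case: (j < n)%N => //=; case: eqP => // ->; by rewrite mul0r.
  rewrite (big_ord_narrow (leqnSn n)) /=.
  have -> : dotv a (x i) = t i by rewrite /t inord_val.
  by rewrite addrC (interp y tinc) // -ltnS ltn_ord.
have yT : forall i : 'I_n.+1, y i = if i \in T then z i else 0.
  by move=> i; rewrite /y inord_val.
split; last first.
  split => i iT; rewrite key yT; [by rewrite iT | by rewrite (negbTE iT)].
pose S := \bigcup_(P in consec_partition (~: T)) intr P.
have cS : forall j, j \in S -> c j = 0.
  move=> j /bigcupP[P Pp jP]; case: (intr_notT Pp jP) => j0 jn n1 n2 n3.
  have [j' ej] : exists j', val j = j'.+1 by exists j.-1; rewrite prednK.
  rewrite ej /= in n1 n3; rewrite /c /cf ej.
  have y1 : y j' = 0 by rewrite /y (negbTE n1).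
  have y2 : y j'.+1 = 0 by rewrite /y -ej inord_val (negbTE n2).
  have y3 : y j'.+2 = 0 by rewrite /y (negbTE n3).
  by rewrite /slp y1 y2 y3 !subrr !mul0r subrr.
pose A := [set j : 'I_n.+1 | (j < n)%N].
have eA : A = [set~ ord_max].
  apply/setP => j; rewrite !inE; apply/idP/idP.
    by move=> h; apply/eqP => e; move: h; rewrite e /= ltnn.
  move=> h; have := ltn_ord j; rewrite ltnS leq_eqVlt => /orP[/eqP e | //].
  by move: h; rewrite -(inj_eq val_inj) /= e eqxx.
have cA : #|A| = n by rewrite eA cardsC1 card_ord.
have SA : S \subset A.
  apply/subsetP => j /bigcupP[P Pp jP]; case: (intr_notT Pp jP) => _ jn _ _ _.
  by rewrite inE.
have JS : J \subset A :\: S.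
  apply/subsetP => j; rewrite !inE => /andP[jn cj]; rewrite jn andbT.
  by apply/negP => jS; move: cj; rewrite cS ?eqxx.
have h1 := subset_leq_card JS.
rewrite cardsD (setIidPr SA) cA in h1.
have h2 := sum_part_le (~: T).
rewrite -/S in h2.
rewrite subn1 /=; apply: leq_trans h1 _; exact: leq_sub2l h2.
Qed.
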